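(* Let $(H,+,\circ)$ be a commutative multiplicative hyperring with identity $1$ such that $1+1\in U(H)$, and let $P$ be a nonzero sdf-absorbing strong $\mathcal{C}$-hyperideal of $H$. Then $P$ is a prime hyperideal of $H$.
   Context: A commutative multiplicative hyperring $(H,+,\circ)$ consists of an abelian group $(H,+)$ and an associative, commutative hyperoperation $\circ: H\times H\to P^*(H)$ with $x\circ(y+z)\subseteq x\circ y+x\circ z$ and $x\circ(-y)=-(x\circ y)=(-x)\circ y$. For subsets $A,B$, $A\circ B=\bigcup_{a\in A,b\in B}a\circ b$, $A\pm B=\{a\pm b\}$; $x^2=x\circ x$. Identity: $x\in x\circ 1$ for all $x$. $U(H)$ is the set of units, i.e. $x$ with $1\in x\circ y$ for some $y\in H$. A hyperideal is a nonempty $P$ with $x-y\in P$ and $r\circ x\subseteq P$ for $x,y\in P$, $r\in H$; it is prime if proper and $x\circ y\subseteq P$ implies $x\in P$ or $y\in P$. Let $\mathcal{C}=\{c_1\circ\cdots\circ c_n: c_i\in H\}$ and $\mathfrak{C}=\{\sum_{i=1}^m C_i: C_i\in\mathcal{C}\}$; $P$ is a strong $\mathcal{C}$-hyperideal if for every $D\in\mathfrak{C}$, $D\cap P\neq\varnothing$ implies $D\subseteq P$. A proper hyperideal $P$ is sdf-absorbing if whenever $0\neq x,y\in H$ and $x^2-y^2\subseteq P$, then $x-y\in P$ or $x+y\in P$. *)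

(* Defs.v *)
From HB Require Import structures.
From mathcomp Require Import all_boot all_algebra.
Set Implicit Arguments. Unset Strict Implicit. Unset Printing Implicit Defensive.
Import GRing.Theory.
Local Open Scope ring_scope.

Definition hset (H : Type) := H -> Prop.

Section Hyperring.
Variables (H : zmodType) (hm : H -> H -> hset H).

Definition setprod (A B : hset H) : hset H :=
  fun z => exists a b, A a /\ B b /\ hm a b z.
Definition setadd (A B : hset H) : hset H :=
  fun z => exists a b, A a /\ B b /\ z = a + b.
Definition setsub (A B : hset H) : hset H :=
  fun z => exists a b, A a /\ B b /\ z = a - b.
Definition sset1 (x : H) : hset H := fun z => z = x.
Definition subset (A B : hset H) := forall z, A z -> B z.
Definition seteq (A B : hset H) := forall z, A z <-> B z.

Definition comm_mult_hyperring : Prop :=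
  [/\ (forall x y, exists z, hm x y z),
      (forall x y z, seteq (setprod (setprod (sset1 x) (sset1 y)) (sset1 z))
                           (setprod (sset1 x) (setprod (sset1 y) (sset1 z)))),
      (forall x y, seteq (hm x y) (hm y x)),
      (forall x y z, subset (hm x (y + z)) (setadd (hm x y) (hm x z))) &
      (forall x y, seteq (hm x (- y)) (fun w => hm x y (- w)) /\
                   seteq (hm (- x) y) (fun w => hm x y (- w)))].

Definition has_identity (one : H) : Prop := forall x, hm x one x.

Definition is_unit (one x : H) : Prop := exists y, hm x y one.

Definition hyperideal (P : hset H) : Prop :=
  [/\ exists x, P x,
      (forall x y, P x -> P y -> P (x - y)) &
      (forall r x, P x -> subset (hm r x) P)].

Definition proper (P : hset H) : Prop := exists x, ~ P x.

Definition prime_hyperideal (P : hset H) : Prop :=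
  [/\ hyperideal P, proper P &
      forall x y, subset (hm x y) P -> P x \/ P y].

(* c_1 o c_2 o ... o c_n  (n >= 1), given as head x and tail xs *)
Fixpoint hprod (x : H) (xs : seq H) : hset H :=
  match xs with
  | [::] => sset1 x
  | y :: ys => setprod (sset1 x) (hprod y ys)
  end.

Fixpoint hsum (C : hset H) (Cs : seq (hset H)) : hset H :=
  match Cs with
  | [::] => C
  | D :: Ds => setadd C (hsum D Ds)
  end.

Definition in_frakC (D : hset H) : Prop :=
  exists (x0 : H) (xs0 : seq H) (l : seq (H * seq H)),
    seteq D (hsum (hprod x0 xs0) (map (fun p => hprod p.1 p.2) l)).

Definition strong_C_hyperideal (P : hset H) : Prop :=
  hyperideal P /\
  forall D, in_frakC D -> (exists z, D z /\ P z) -> subset D P.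

Definition sdf_absorbing (P : hset H) : Prop :=
  [/\ hyperideal P, proper P &
      forall x y, x != 0 -> y != 0 ->
        subset (setsub (hm x x) (hm y y)) P -> P (x - y) \/ P (x + y)].

Definition nonzero_set (P : hset H) : Prop := exists x, P x /\ x != 0.

End Hyperring.

(* Main.v *)
Require Import Defs.
From mathcomp Require Import all_boot all_algebra.
From Stdlib Require Import Classical.
Local Open Scope ring_scope.
Import GRing.Theory.

Lemma mainEq (H : zmodType) (p q r t p' q' r' t' : H) :
  (p + q + (r + t)) - (p' + q' + - (r' + t')) =
  (p + - p') + (t + t') + q + r - q' + r'.
Proof.
rewrite !opprD !opprK !addrA.
by rewrite [LHS](ACl (1*5*4*8*2*3*6*7)%AC).
Qed.

Theorem mainTheorem13 (H : zmodType) (hm : H -> H -> hset H) (one : H)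
  (P : hset H) :
  comm_mult_hyperring hm ->
  has_identity hm one ->
  is_unit hm one (one + one) ->
  nonzero_set P ->
  sdf_absorbing hm P ->
  strong_C_hyperideal hm P ->
  prime_hyperideal hm P.
Proof.
move=> [_ assoc comm distr neg] hid [u hu] [i [Pi inz]] [hI prP sdf] [_ sC].
have [[x0 Px0] Psub Pid] := hI.
have P0 : P 0 by rewrite -(subrr x0); apply: (Psub).
have PN : forall x, P x -> P (- x) by move=> x Px; rewrite -sub0r; apply: (Psub).
have PD : forall x y, P x -> P y -> P (x + y).
  by move=> x y Px Py; rewrite -(opprK y); apply: (Psub) => //; apply: (PN).
have PNN : forall x, P (- x) -> P x by move=> x /PN; rewrite opprK.
have hcomm : forall x y w, hm x y w -> hm y x w by move=> x y w /(comm x y w).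
have negr : forall x y w, hm x (- y) w -> hm x y (- w).
  by move=> x y w h; have [/(_ w) [A _] _] := neg x y; apply: A.
have negr' : forall x y w, hm x y (- w) -> hm x (- y) w.
  by move=> x y w h; have [/(_ w) [_ A] _] := neg x y; apply: A.
have dist : forall x y z w, hm x (y + z) w ->
    exists s t, hm x y s /\ hm x z t /\ w = s + t.
  by move=> x y z w /distr.
have sC2 : forall c1 c2 d1 d2 s t, hm c1 c2 s -> hm d1 d2 t -> P (s + t) ->
    forall s' t', hm c1 c2 s' -> hm d1 d2 t' -> P (s' + t').
  move=> c1 c2 d1 d2 s t hs ht Pst s' t' hs' ht'.
  have eqD : forall c d, seteq (setprod hm (sset1 c) (sset1 d)) (hm c d).
    move=> c d z; split; first by move=> [a [b [-> [-> h]]]].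
    by move=> h; exists c, d.
  apply: (sC (setadd (hm c1 c2) (hm d1 d2)) _ _ (s' + t')).
  - exists c1, [:: c2], [:: (d1, [:: d2])] => z /=.
    split.
    + by move=> [a [b [ha [hb ->]]]]; exists a, b; rewrite !eqD.
    + by move=> [a [b [ha [hb ->]]]]; exists a, b; rewrite -!eqD.
  - by exists (s + t); split => //; exists s, t.
  - by exists s', t'.
have two : forall a, P (a + a) -> P a.
  move=> a Paa.
  have : setprod hm (sset1 a) (setprod hm (sset1 (one + one)) (sset1 u)) a.
    exists a, one; split => //; split => //.
    by exists (one + one), u.
  move=> /(assoc a (one + one) u a) [w [v [[a1 [b1 [-> [-> hw]]]] [-> hwu]]]].
  have Pw : P w.
    have [s [t [hs [ht ->]]]] := dist _ _ _ _ hw.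
    exact: (sC2 a one a one a a (hid a) (hid a) Paa).
  exact: (Pid u w Pw a (hcomm _ _ _ hwu)).
have sq : forall a, Defs.subset (hm a a) P -> ~ P a -> False.
  move=> a haa nPa.
  have anz : a != 0 by apply/eqP => a0; apply: nPa; rewrite a0.
  have [] := sdf a i anz inz.
  - move=> z [s [t [hs [ht ->]]]].
    by apply: (Psub); [apply: (haa) | apply: (Pid i i Pi)].
  - move=> h; apply: nPa; have := PD _ _ h Pi.
    by rewrite subrK.
  - move=> h; apply: nPa; have := Psub _ _ h Pi.
    by rewrite addrK.
split => // a b hab.
case: (classic (P a)) => [|nPa]; first by left.
case: (classic (P b)) => [|nPb]; first by right.
exfalso.
have [e1|ne1] := eqVneq (a + b) 0.
  apply: (sq a) nPa => w hw; apply: (PNN); apply: (hab).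
  have -> : b = - a by apply/eqP; rewrite -addr_eq0 addrC e1.
  by apply: (negr'); rewrite opprK.
have [e2|ne2] := eqVneq (a - b) 0.
  apply: (sq a) nPa => w hw; apply: (hab).
  by move/eqP: e2; rewrite subr_eq0 => /eqP <-.
have [] := sdf (a + b) (a - b) ne1 ne2.
- move=> z [s [s' [hs [hs' ->]]]].
  have [s1 [s2 [h1 [h2 ->]]]] := dist _ _ _ _ hs.
  have [p [q [hp [hq ->]]]] := dist _ _ _ _ (hcomm _ _ _ h1).
  have [r [t [hr [ht ->]]]] := dist _ _ _ _ (hcomm _ _ _ h2).
  have [s1' [s2' [h1' [h2' ->]]]] := dist _ _ _ _ hs'.
  have [p' [q' [hp' [hq' ->]]]] := dist _ _ _ _ (hcomm _ _ _ h1').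
  have := hcomm _ _ _ (negr _ _ _ h2').
  move=> /dist [r' [t' [hr' [ht' e]]]].
  have -> : s2' = - (r' + t') by rewrite -e opprK.
  rewrite mainEq.
  apply: (PD); last by apply: (hab); apply: (hcomm).
  apply: (Psub); last by apply: (PNN); apply: (hab); apply: (negr).
  apply: (PD); last by apply: (hab); apply: (hcomm).
  apply: (PD) => //; last by apply: (hab).
  apply: (PD).
  + apply: (sC2 a a a (- a) p (- p) hp) => //.
      by apply: (negr'); rewrite opprK.
      by rewrite subrr.
    by apply: (negr'); rewrite opprK.
  + apply: (sC2 b b b (- b) t (- t) ht) => //.
      by apply: (negr'); rewrite opprK.
      by rewrite subrr.
- by move=> h; apply: nPb; apply: two; move: h; rewrite opprB addrC addrA subrK.
- by move=> h; apply: nPa; apply: two; move: h; rewrite addrACA subrr addr0.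
Qed.
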